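(* Let $p$ be an odd prime, let $\Delta\in\mathbb{Z}$ with $\Delta\equiv 3\pmod 4$ be a quadratic non-residue modulo $p$, and let $\mathfrak{p}=p\mathbb{Z}[\sqrt{\Delta}]$. For $0\le k\le p-1$ let $a_k=k+\sqrt{\Delta}$, and let $B_p=\prod_{0\le k\le p-1}(1-a_k^{p-1})$. Then $$B_p^{\frac{p-1}{2}}\equiv 1\pmod{\mathfrak{p}}.$$ *)

(* Defs.v *)
From mathcomp Require Import all_boot all_order all_algebra.
Set Implicit Arguments. Unset Strict Implicit. Unset Printing Implicit Defensive.
Import Order.TTheory GRing.Theory Num.Theory.
Local Open Scope ring_scope.

(* Elements of Z[sqrt D] are represented as pairs (a, b) : int * int,
   standing for a + b * sqrt D. *)
Definition zq := (int * int)%type.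

Definition zq_of_int (n : int) : zq := (n, 0).
Definition zq_add (x y : zq) : zq := (x.1 + y.1, x.2 + y.2).
Definition zq_sub (x y : zq) : zq := (x.1 - y.1, x.2 - y.2).
(* (a + b sqrtD)(c + d sqrtD) = (ac + D bd) + (ad + bc) sqrtD *)
Definition zq_mul (D : int) (x y : zq) : zq :=
  (x.1 * y.1 + D * (x.2 * y.2), x.1 * y.2 + x.2 * y.1).
Definition zq_exp (D : int) (x : zq) (n : nat) : zq :=
  iter n (zq_mul D x) (zq_of_int 1).
Definition zq_prod (D : int) (s : seq zq) : zq :=
  foldr (zq_mul D) (zq_of_int 1) s.

(* x = y mod the ideal p Z[sqrt D]: p divides both coordinates of x - y. *)
Definition zq_cong (p : nat) (x y : zq) : Prop :=
  (p%:Z %| (x.1 - y.1))%Z /\ (p%:Z %| (x.2 - y.2))%Z.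

Definition qnonres (p : nat) (D : int) : Prop :=
  ~ exists x : int, (p%:Z %| (x ^+ 2 - D))%Z.

Definition a_k (k : nat) : zq := (k%:Z, 1).

Definition B_p (p : nat) (D : int) : zq :=
  zq_prod D [seq zq_sub (zq_of_int 1) (zq_exp D (a_k k) p.-1) | k <- iota 0 p].

(* Main.v *)
Require Import Defs.
From mathcomp Require Import all_boot all_order all_algebra.
From mathcomp Require Import all_fingroup all_solvable all_field.
From mathcomp Require Import zify ring.
Import Order.TTheory GRing.Theory Num.Theory FinRing.Theory.
Local Open Scope ring_scope.


Lemma euler_nonres (p : nat) (pr : prime p) (op : odd p) (d : 'F_p) :
  d != 0 -> (forall x : 'F_p, x ^+ 2 != d) -> d ^+ (p.-1)./2 = -1.
Proof.
move=> dn0 nsq.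
have cF : #|'F_p| = p := card_Fp pr.
have := field_unit_group_cyclic [set: {unit 'F_p}]%G; case/cyclicP => g Hg.
have Ud : d \is a GRing.unit by rewrite unitfE.
have : FinRing.unit 'F_p Ud \in <[g]>%g by rewrite -Hg inE.
case/cycleP => i Hi.
have og : #[g]%g = p.-1 by rewrite /order -Hg card_finField_unit cF.
have dval : d = val g ^+ i by rewrite -val_unitX -Hi.
have p1 : p.-1 = (p./2).*2.
  by rewrite -{1}(odd_double_half p) op add1n.
have hE : (p.-1)./2 = p./2 by rewrite p1 doubleK.
have p2 : (1 < p)%N := prime_gt1 pr.
have hpos : (0 < p./2)%N.
  by move: p1 p2; rewrite -muln2; lia.
have gp1 : val g ^+ p.-1 = 1.
  by rewrite -val_unitX -og expg_order.
rewrite hE dval.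
move: dval; rewrite -(odd_double_half i); case: (odd i) => /= dval.
- set y := val g ^+ p./2.
  have y2 : y ^+ 2 = 1 by rewrite /y -exprM muln2 -p1 gp1.
  have yn1 : y != 1.
    apply/negP => /eqP y1.
    have : (g ^+ p./2)%g = 1%g by apply: val_inj; rewrite val_unitX -/y y1.
    move/eqP; rewrite -order_dvdn og p1 => /dvdn_leq => /(_ hpos).
    rewrite -addnn; lia.
  have : y == -1 by move: y2 => /eqP; rewrite sqrf_eq1 (negbTE yn1).
  move/eqP => ym1.
  rewrite -exprM.
  have -> : ((1 + (i./2).*2) * p./2 = p./2 + (p./2).*2 * i./2)%N.
    by rewrite -!muln2; nia.
  by rewrite exprD -/y ym1 -p1 exprM gp1 expr1n mulr1.
- exfalso; move: (nsq (val g ^+ (i./2))); rewrite dval -exprM muln2 add0n.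
  by rewrite eqxx.
Qed.

Section Main.
Variables (p : nat) (pr : prime p) (op : odd p) (d : 'F_p).
Hypothesis dn0 : d != 0.
Hypothesis eul : d ^+ (p.-1)./2 = -1.

Let m : {poly 'F_p} := 'X^2 - d%:P.
Local Notation red q := (q %% m).

Lemma sm : size m = 3%N.
Proof. by rewrite /m size_XnsubC. Qed.

Lemma red_small (q : {poly 'F_p}) : (size q < 3)%N -> red q = q.
Proof. by move=> h; rewrite modp_small // sm. Qed.

Lemma redM (a b : {poly 'F_p}) : red (a * b) = red (red a * red b).
Proof. by rewrite modp_mul (mulrC (_ %% m)) modp_mul mulrC. Qed.

Lemma redMl (c a b : {poly 'F_p}) : red a = red b -> red (c * a) = red (c * b).
Proof. by move=> h; rewrite -modp_mul h modp_mul. Qed.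

Lemma redX n (a : {poly 'F_p}) : red (a ^+ n) = red ((red a) ^+ n).
Proof.
elim: n => [|n IH]; first by rewrite !expr0.
by rewrite !exprS redM IH modp_mul.
Qed.

Lemma redX2 (q : {poly 'F_p}) : red (q * 'X^2) = red (q * d%:P).
Proof.
have -> : q * 'X^2 = q * m + q * d%:P by rewrite /m; ring.
by rewrite modpD modp_mull add0r.
Qed.

Lemma pchP : p \in [pchar {poly 'F_p}].
Proof. by rewrite pchar_poly pchar_Fp. Qed.

Lemma frob (a b : {poly 'F_p}) : (a + b) ^+ p = a ^+ p + b ^+ p.
Proof. by rewrite -!(pFrobenius_autE pchP) rmorphD. Qed.

Lemma fermat (c : 'F_p) : c ^+ p = c.
Proof. by rewrite -{2}(expf_card c) card_Fp. Qed.

Lemma fermatP (c : 'F_p) : c%:P ^+ p = c%:P.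
Proof. by rewrite -rmorphXn fermat. Qed.

Lemma p1 : p.-1 = ((p.-1)./2).*2.
Proof.
have e : p.-1 = (p./2).*2 by rewrite -{1}(odd_double_half p) op add1n.
by rewrite {2}e doubleK.
Qed.

Lemma redXp : red ('X^p) = red (- 'X).
Proof.
have -> : 'X^p = 'X * ('X^2) ^+ (p.-1)./2 :> {poly 'F_p}.
  by rewrite -exprM mul2n -p1 -exprS prednK // prime_gt0.
rewrite redM (redX _ ('X^2)).
have -> : red ('X^2) = red (d%:P) by rewrite -(mul1r 'X^2) redX2 mul1r.
rewrite -redX -rmorphXn eul -redM; congr (_ %% _).
by rewrite rmorphN1 mulrN1.
Qed.

Lemma stepA (c : 'F_p) :
  red (('X + c%:P) * (1 - ('X + c%:P) ^+ p.-1)) = red ('X *+ 2).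
Proof.
have -> : ('X + c%:P) * (1 - ('X + c%:P) ^+ p.-1) = 'X + c%:P - ('X + c%:P) ^+ p.
  have e : ('X + c%:P) ^+ p = ('X + c%:P) ^+ p.-1 * ('X + c%:P) by rewrite -exprSr prednK // prime_gt0.
  by rewrite e; ring.
rewrite frob fermatP.
have -> : 'X + c%:P - ('X ^+ p + c%:P) = 'X - 'X^p by ring.
by rewrite modpD modpN redXp modpN opprK -modpD mulr2n.
Qed.

Lemma prodQ : \prod_(c : 'F_p) ('X + c%:P) = 'X^p - 'X.
Proof.
have h := @finField_genPoly 'F_p; rewrite card_Fp // in h; rewrite h.
rewrite (reindex_inj (@oppr_inj _)) /=.
by apply: eq_bigr => c _; rewrite rmorphN.
Qed.

Lemma redprod (I : finType) (f g : I -> {poly 'F_p}) :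
  (forall i, red (f i) = red (g i)) -> red (\prod_i f i) = red (\prod_i g i).
Proof.
move=> h; elim/big_rec2: _ => [//|i a b _ IH].
by rewrite redM h IH -redM.
Qed.

Lemma two_neq0 : (2%:R : 'F_p) != 0.
Proof.
rewrite -(dvdn_pcharf (pchar_Fp pr)); apply/negP => /(dvdn_leq (isT : (0 < 2)%N)).
move=> h; have p2 : p = 2%N by have := prime_gt1 pr; lia.
by move: op; rewrite p2.
Qed.

Lemma key : red (\prod_(c : 'F_p) (1 - ('X + c%:P) ^+ p.-1)) = 1.
Proof.
set P := \prod_(c : 'F_p) _.
have e1 : red (\prod_(c : 'F_p) (('X + c%:P) * (1 - ('X + c%:P) ^+ p.-1)))
   = red ((2%:R)%:P * - 'X).
  rewrite (@redprod _ _ _ stepA) prodr_const cardT -cardE card_Fp //.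
  have -> : 'X *+ 2 = (2%:R)%:P * 'X :> {poly 'F_p} by rewrite mul_polyC scaler_nat.
  rewrite exprMn fermatP; exact: redMl redXp.
rewrite big_split /= prodQ -/P redM in e1.
have eQ : red ('X^p - 'X) = red (- ((2%:R)%:P * 'X)).
  rewrite modpD modpN redXp -modpN -modpD; congr (_ %% _).
  by rewrite rmorph_nat; ring.
rewrite eQ -redM in e1.
have e2 := @redMl 'X _ _ e1.
have h1 : 'X * (- ((2%:R)%:P * 'X) * P) = (- (2%:R)%:P * P) * 'X^2 by ring.
have h2 : 'X * ((2%:R)%:P * - 'X) = (- (2%:R)%:P * 1) * 'X^2 :> {poly 'F_p} by ring.
rewrite h1 h2 !redX2 in e2.
have h3 : - (2%:R)%:P * P * d%:P = (- (2%:R) * d) *: P by rewrite -mul_polyC rmorphM rmorphN; ring.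
have h4 : - (2%:R)%:P * 1 * d%:P = (- (2%:R) * d) *: (1 : {poly 'F_p}) by rewrite -mul_polyC rmorphM rmorphN; ring.
rewrite h3 h4 !modpZl in e2.
have nz : (- (2%:R) * d : 'F_p) != 0 by rewrite mulf_neq0 // oppr_eq0 two_neq0.
by rewrite (scalerI nz e2) red_small // size_poly1.
Qed.

Lemma redprod_seq (I : Type) (s : seq I) (f g : I -> {poly 'F_p}) :
  (forall i, red (f i) = red (g i)) ->
  red (\prod_(i <- s) f i) = red (\prod_(i <- s) g i).
Proof.
move=> h; elim/big_rec2: _ => [//|i a b _ IH].
by rewrite redM h IH -redM.
Qed.

Variable D : int.
Hypothesis dD : d = D%:~R.

Definition psi (x : zq) : {poly 'F_p} := (x.2%:~R)%:P * 'X + (x.1%:~R)%:P.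

Lemma psi_small x : (size (psi x) < 3)%N.
Proof. by rewrite /psi size_MXaddC; case: ifP => // _; rewrite ltnS size_polyC; case: (_ != 0). Qed.

Lemma psi_mul x y : psi (zq_mul D x y) = red (psi x * psi y).
Proof.
have -> : psi x * psi y = psi (zq_mul D x y) + ((x.2 * y.2)%:~R)%:P * m.
  rewrite /psi /zq_mul /m dD /= !intrD !intrM !polyCD !polyCM; ring.
by rewrite modpD modp_mull addr0 red_small // psi_small.
Qed.

Lemma psi_one : psi (zq_of_int 1) = 1.
Proof. by rewrite /psi /= mul0r add0r. Qed.

Lemma psi_sub x y : psi (zq_sub x y) = psi x - psi y.
Proof. rewrite /psi /zq_sub /= !intrB !polyCB; ring. Qed.

Lemma psi_exp x n : psi (zq_exp D x n) = red (psi x ^+ n).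
Proof.
elim: n => [|n IH].
  by rewrite expr0 /zq_exp /= psi_one red_small // size_poly1.
by rewrite /zq_exp iterS -/(zq_exp D x n) psi_mul IH modp_mul exprS.
Qed.

Lemma psi_prod s : psi (zq_prod D s) = red (\prod_(x <- s) psi x).
Proof.
elim: s => [|x s IH].
  by rewrite big_nil /zq_prod /= psi_one red_small // size_poly1.
by rewrite big_cons /= psi_mul -/(zq_prod D s) IH modp_mul.
Qed.

Lemma psi_ak k : psi (a_k k) = 'X + (k%:R)%:P.
Proof. by rewrite /psi /a_k /= mul1r. Qed.

Lemma reindex_Fp (f : 'F_p -> {poly 'F_p}) :
  \prod_(k <- iota 0 p) f (k%:R) = \prod_(c : 'F_p) f c.
Proof.
rewrite -(big_map (fun k => (k%:R : 'F_p)) xpredT f).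
apply: perm_big.
have sub : {subset index_enum 'F_p <= [seq (k%:R : 'F_p) | k <- iota 0 p]}.
  move=> x _; apply/mapP; exists (x : nat); last by rewrite natr_Zp.
  by rewrite mem_iota add0n /= -[X in (_ < X)%N](Fp_cast pr) ltn_ord.
apply: uniq_perm.
- apply: (leq_size_uniq (index_enum_uniq _) sub).
  by rewrite size_map size_iota /index_enum unlock -enumT -cardT card_Fp.
- exact: index_enum_uniq.
- by move=> x; rewrite mem_index_enum; apply: sub; rewrite mem_index_enum.
Qed.

Lemma psi_B : psi (B_p p D) = red (\prod_(c : 'F_p) (1 - ('X + c%:P) ^+ p.-1)).
Proof.
rewrite /B_p psi_prod big_map -reindex_Fp.
apply: redprod_seq => k.
rewrite psi_sub psi_one psi_exp psi_ak modpD modpN modp_id -modpN -modpD.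
by [].
Qed.

End Main.

Theorem lemma2p2 (p : nat) (D : int) :
  prime p -> odd p ->
  (D %% 4)%Z = 3 ->
  qnonres p D ->
  zq_cong p (zq_exp D (B_p p D) (p.-1)./2) (zq_of_int 1).
Proof.
move=> pr op _ nq.
pose d : 'F_p := D%:~R.
have nsq : forall x : 'F_p, x ^+ 2 != d.
  move=> x; apply/eqP => hx; apply: nq; exists (x : nat)%:Z.
  rewrite (dvdz_pcharf (pchar_Fp pr)) rmorphB /= rmorphXn /= -/d -hx.
  have -> : ((x : nat)%:Z)%:~R = x :> 'F_p by rewrite -[RHS]natr_Zp.
  by rewrite subrr.
have dn0 : d != 0 by apply/eqP => d0; move: (nsq 0); rewrite d0 expr0n.
have eul := @euler_nonres p pr op d dn0 nsq.
have E : psi p (zq_exp D (B_p p D) (p.-1)./2) = psi p (zq_of_int 1).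
  rewrite (@psi_exp p d D erefl) (@psi_B p pr d D erefl).
  rewrite (@key p pr op d dn0 eul) expr1n psi_one.
  by rewrite (@red_small p d) // size_poly1.
have c0 := congr1 (fun q : {poly 'F_p} => q`_0) E; have c1 := congr1 (fun q : {poly 'F_p} => q`_1) E.
rewrite /psi /= !coefD !coefMX !coefC /= in c0 c1.
split; rewrite (dvdz_pcharf (pchar_Fp pr)) rmorphB /= subr_eq0; apply/eqP.
  by move: c0; rewrite !add0r.
by move: c1; rewrite !addr0.
Qed.
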